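(* Let $M$ be a finite inverse monoid whose Green's relation $\mathscr{H}$ is trivial, and let $0$ be its zero. Let $\rho$ be a congruence of $M$ such that, for every $e\in E(M)$, if there exists $f\in E(M)$ with $f<e$ and $e\,\rho\, f$, then $e\,\rho\,0$. Then $\rho$ is a Rees congruence of $M$.
   Context: A finite inverse monoid with trivial $\mathscr{H}$-relation has a zero element. $E(M)$ is the set of idempotents of $M$, with natural partial order $e\leqslant f$ iff $ef=e=fe$; $f<e$ means $f\leqslant e$ and $f\neq e$. Green's relation $\mathscr{H}$: $a\mathscr{H}b$ iff $Ma=Mb$ and $aM=bM$. For an ideal $I$ of $M$ (i.e. $MIM\subseteq I$), the Rees congruence $\sim_I$ is defined by $a\sim_I b$ iff $a=b$ or $a,b\in I$. *)

(* Defs.v *)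
From mathcomp Require Import all_boot.
Set Implicit Arguments. Unset Strict Implicit. Unset Printing Implicit Defensive.

Section Defs.
Variables (T : Type) (mul : T -> T -> T) (one : T).

Definition is_monoid : Prop :=
  (forall a b c, mul a (mul b c) = mul (mul a b) c) /\
  (forall a, mul one a = a) /\ (forall a, mul a one = a).

Definition is_inverse_monoid : Prop :=
  is_monoid /\
  forall a, exists! b, mul a (mul b a) = a /\ mul b (mul a b) = b.

Definition idempotent_el (e : T) : Prop := mul e e = e.

Definition nat_le (e f : T) : Prop := mul e f = e /\ mul f e = e.
Definition nat_lt (f e : T) : Prop := nat_le f e /\ f <> e.

Definition greenH (a b : T) : Prop :=
  (forall c, (exists x, c = mul x a) <-> (exists x, c = mul x b)) /\
  (forall c, (exists x, c = mul a x) <-> (exists x, c = mul b x)).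

Definition H_trivial : Prop := forall a b, greenH a b -> a = b.

Definition is_zero (z : T) : Prop := forall a, mul z a = z /\ mul a z = z.

Definition is_congruence (rho : T -> T -> Prop) : Prop :=
  (forall a, rho a a) /\ (forall a b, rho a b -> rho b a) /\
  (forall a b c, rho a b -> rho b c -> rho a c) /\
  (forall a b c, rho a b -> rho (mul c a) (mul c b) /\ rho (mul a c) (mul b c)).

Definition is_ideal (I : T -> Prop) : Prop :=
  forall x a y, I a -> I (mul (mul x a) y).

Definition rees_cong (I : T -> Prop) (a b : T) : Prop := a = b \/ (I a /\ I b).

Definition is_rees_congruence (rho : T -> T -> Prop) : Prop :=
  exists I, is_ideal I /\ forall a b, rho a b <-> rees_cong I a b.
End Defs.

(* Main.v *)
Require Import Defs.
From mathcomp Require Import all_boot.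

Lemma idem_comm (T : Type) (mul : T -> T -> T) (one : T) :
  is_inverse_monoid mul one -> forall e f, mul e e = e -> mul f f = f ->
  mul e f = mul f e.
Proof.
move=> [[A [L R]] Inv].
have uniq: forall u x y, mul u (mul x u) = u /\ mul x (mul u x) = x ->
   mul u (mul y u) = u /\ mul y (mul u y) = y -> x = y.
  by move=> u x y Hx Hy; case: (Inv u) => w [_ Hw]; rewrite -(Hw x Hx) -(Hw y Hy).
have idem: forall e f, mul e e = e -> mul f f = f -> mul (mul e f) (mul e f) = mul e f.
  move=> e f He Hf.
  have He' : forall c, mul (mul c e) e = mul c e by move=> c; rewrite -A He.
  have Hf' : forall c, mul (mul c f) f = mul c f by move=> c; rewrite -A Hf.
  case: (Inv (mul e f)) => x [[H1 H2] _].
  rewrite !A in H1 H2.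
  have H2' : forall c, mul (mul (mul (mul c x) e) f) x = mul c x.
    by move=> c; rewrite -!A -[in RHS]H2 !A.
  have Hx: x = mul (mul f x) e.
    apply: (uniq (mul e f)); first by rewrite !A.
    rewrite !A ?He' ?Hf' ?He'; split; first by [].
    by rewrite H2'.
  have Hxx : mul x x = x.
    rewrite {1 2}Hx !A H2' -Hx //.
  have : mul (mul e f) (mul x (mul e f)) = mul e f /\ mul x (mul (mul e f) x) = x.
    by rewrite !A.
  have : mul x (mul x x) = x /\ mul x (mul x x) = x by rewrite Hxx Hxx.
  move=> Hxinv Hef.
  have Hs : mul x (mul (mul e f) x) = x /\ mul (mul e f) (mul x (mul e f)) = mul e f.
    by case: Hef.
  have := uniq x _ _ Hxinv Hs.
  by move=> <-.
move=> e f He Hf.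
have He' : forall c, mul (mul c e) e = mul c e by move=> c; rewrite -A He.
have Hf' : forall c, mul (mul c f) f = mul c f by move=> c; rewrite -A Hf.
have I1 := idem e f He Hf.
have I2 := idem f e Hf He.
have I1' : forall c, mul (mul (mul (mul c e) f) e) f = mul (mul c e) f.
  by move=> c; rewrite -!A -[in RHS]I1 !A.
have I2' : forall c, mul (mul (mul (mul c f) e) f) e = mul (mul c f) e.
  by move=> c; rewrite -!A -[in RHS]I2 !A.
have I1a := I1. rewrite !A in I1a.
have I2a := I2. rewrite !A in I2a.
apply: (uniq (mul e f)).
  by rewrite !A ?I1a ?I1' ?I1a; split.
rewrite !A ?Hf' ?He' ?I1a ?I2a ?I1' ?I2'; by split.
Qed.


Theorem lemma3p1 (T : finType) (mul : T -> T -> T) (one z : T)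
  (rho : T -> T -> Prop) :
  is_inverse_monoid mul one ->
  H_trivial mul ->
  is_zero mul z ->
  is_congruence mul rho ->
  (forall e, idempotent_el mul e ->
     (exists f, idempotent_el mul f /\ nat_lt mul f e /\ rho e f) ->
     rho e z) ->
  is_rees_congruence mul rho.
Proof.
move=> Hinv HH Hz [Rr [Rs [Rt Rc]]] Hyp.
have [[A [L R]] Inv] := Hinv.
have Rl : forall c x y, rho x y -> rho (mul c x) (mul c y).
  by move=> c x y H; case: (Rc _ _ c H).
have Rr' : forall c x y, rho x y -> rho (mul x c) (mul y c).
  by move=> c x y H; case: (Rc _ _ c H).
have idinv : forall a a', mul a (mul a' a) = a -> mul a' (mul a a') = a' ->
   mul (mul a' a) (mul a' a) = mul a' a /\ mul (mul a a') (mul a a') = mul a a'.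
  by move=> a a' H1 H2; rewrite -!A H1 H2.
have chain1 : forall a b a' b', mul a (mul a' a) = a -> mul a' (mul a a') = a' ->
   mul b (mul b' b) = b -> mul b' (mul b b') = b' -> rho a b ->
   rho a' (mul (mul b' a) a').
  move=> a b a' b' Ha1 Ha2 Hb1 Hb2 Hab.
  have [Ia _] := idinv _ _ Ha1 Ha2.
  have [Ib _] := idinv _ _ Hb1 Hb2.
  have C := @idem_comm _ _ _ Hinv _ _ Ia Ib.
  have Cc : forall c, mul (mul (mul (mul c a') a) b') b = mul (mul (mul (mul c b') b) a') a.
    by move=> c; have := f_equal (mul c) C; rewrite !A.
  have Ha2n : mul (mul a' a) a' = a' by rewrite -A.
  have Ha2c : forall c, mul (mul (mul c a') a) a' = mul c a'.
    by move=> c; have := f_equal (mul c) Ha2; rewrite !A.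
  have Hb1c : forall c, mul (mul (mul c b) b') b = mul c b.
    by move=> c; have := f_equal (mul c) Hb1; rewrite !A.
  apply: (Rt _ (mul (mul a' b) a')).
    rewrite -{1}Ha2n; apply Rr'; exact: Rl.
  apply: (Rt _ (mul (mul (mul (mul a' a) b') b) a')).
    rewrite -{1}[mul a' b]Hb1c; apply Rr'; apply Rr'; apply Rr'; apply Rl; exact: Rs.
  apply: (Rt _ (mul (mul b' b) a')).
    by have Cn := C; rewrite !A in Cn; rewrite Cn Ha2c; apply: Rr.
  apply Rr'; apply Rl; exact: Rs.
have chain2 : forall a b a' b', mul a (mul a' a) = a -> mul a' (mul a a') = a' ->
   mul b (mul b' b) = b -> mul b' (mul b b') = b' -> rho a b ->
   rho a' (mul (mul a' a) b').
  move=> a b a' b' Ha1 Ha2 Hb1 Hb2 Hab.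
  have [_ Ia] := idinv _ _ Ha1 Ha2.
  have [_ Ib] := idinv _ _ Hb1 Hb2.
  have C := @idem_comm _ _ _ Hinv _ _ Ib Ia.
  have Cc : forall c, mul (mul (mul (mul c b) b') a) a' = mul (mul (mul (mul c a) a') b) b'.
    by move=> c; have := f_equal (mul c) C; rewrite !A.
  have Ha2n : mul (mul a' a) a' = a' by rewrite -A.
  have Hb1c : forall c, mul (mul (mul c b) b') b = mul c b.
    by move=> c; have := f_equal (mul c) Hb1; rewrite !A.
  apply: (Rt _ (mul (mul a' b) a')).
    rewrite -{1}Ha2n; apply Rr'; exact: Rl.
  apply: (Rt _ (mul (mul (mul (mul a' b) b') a) a')).
    rewrite -{1}[mul a' b]Hb1c; apply Rr'; apply Rl; exact: Rs.
  apply: (Rt _ (mul (mul a' b) b')).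
    by rewrite Cc Ha2n; apply: Rr.
  apply Rr'; apply Rl; exact: Rs.
have invresp : forall a b a' b', mul a (mul a' a) = a -> mul a' (mul a a') = a' ->
   mul b (mul b' b) = b -> mul b' (mul b b') = b' -> rho a b -> rho a' b'.
  move=> a b a' b' Ha1 Ha2 Hb1 Hb2 Hab.
  apply: (Rt _ _ _ (chain1 _ _ _ _ Ha1 Ha2 Hb1 Hb2 Hab)).
  apply: (Rt _ (mul (mul b' b) a')).
    apply Rr'; apply Rl; exact: Hab.
  apply Rs; exact: (chain2 _ _ _ _ Hb1 Hb2 Ha1 Ha2 (Rs _ _ Hab)).
have key : forall e f, mul e e = e -> mul f f = f -> rho e f -> e = f \/ rho e z.
  move=> e f He Hf Hef.
  have C := @idem_comm _ _ _ Hinv _ _ He Hf.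
  have Ig : mul (mul e f) (mul e f) = mul e f.
    by rewrite -A [mul f (mul e f)]A -C -A Hf A He.
  have Heg : rho e (mul e f) by rewrite -{1}He; apply Rl.
  have Hfg : rho f (mul e f) by rewrite -{1}Hf; apply Rr'; apply: Rs.
  have [Eg|Ng] := eqVneq (mul e f) e.
    have [Fg|Nf] := eqVneq (mul e f) f.
      by left; rewrite -Eg.
    right; apply: (Rt _ f) => //.
    apply: Hyp => //; exists (mul e f); split=> //; split=> //.
    split; last by apply/eqP.
    by split; [rewrite -A Hf | rewrite C A Hf].
  right; apply Hyp => //; exists (mul e f); split=> //; split=> //.
  split; last by apply/eqP.
  by split; [rewrite -A -C A He | rewrite A He].
have core : forall a b, rho a b -> a <> b -> rho a z.
  move=> a b Hab Nab.
  case: (Inv a) => a' [[Ha1 Ha2] _].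
  case: (Inv b) => b' [[Hb1 Hb2] _].
  have Hab' := invresp _ _ _ _ Ha1 Ha2 Hb1 Hb2 Hab.
  have [Ia1 Ia2] := idinv _ _ Ha1 Ha2.
  have [Ib1 Ib2] := idinv _ _ Hb1 Hb2.
  have Ha1n : mul (mul a a') a = a by rewrite -A.
  have Hb1n : mul (mul b b') b = b by rewrite -A.
  have R1 : rho (mul a a') (mul b b').
    apply: (Rt _ (mul b a')); [exact: Rr' | exact: Rl].
  have R2 : rho (mul a' a) (mul b' b).
    apply: (Rt _ (mul b' a)); [exact: Rr' | exact: Rl].
  have [Zz1 Zz2] := Hz a.
  case: (key _ _ Ia2 Ib2 R1) => [E1|Z1]; last first.
    rewrite -Ha1n -Zz1; exact: Rr'.
  case: (key _ _ Ia1 Ib1 R2) => [E2|Z2]; last first.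
    rewrite -Ha1 -Zz2; exact: Rl.
  exfalso; apply: Nab; apply: HH.
  split=> c; split=> -[x ->].
  - have Ea : a = mul (mul a b') b by rewrite -A -E2 Ha1.
    by exists (mul x (mul a b')); rewrite {1}Ea !A.
  - have Eb : b = mul (mul b a') a by rewrite -A E2 Hb1.
    by exists (mul x (mul b a')); rewrite {1}Eb !A.
  - have Ea : a = mul b (mul b' a) by rewrite A -E1 Ha1n.
    by exists (mul (mul b' a) x); rewrite {1}Ea !A.
  - have Eb : b = mul a (mul a' b) by rewrite A E1 Hb1n.
    by exists (mul (mul a' b) x); rewrite {1}Eb !A.
exists (fun x => rho x z); split.
  move=> x a y Ha.
  have [Zx1 Zx2] := Hz x.
  have [Zy1 Zy2] := Hz y.
  rewrite -Zy1 -Zx2; apply Rr'; exact: Rl.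
move=> a b; split.
  move=> Hab; have [->|Nab] := eqVneq a b; first by left.
  have Nab' : a <> b by apply/eqP.
  have Ha := core _ _ Hab Nab'.
  right; split=> //; apply: (Rt _ a) => //; exact: Rs.
case=> [->|[Ha Hb]]; first exact: Rr.
apply: (Rt _ z) => //; exact: Rs.
Qed.
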